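(* Let $\mathbb G$ be a special 2-group, $(n,\rho,\beta,c)$ and $(n',\rho',\beta',c')$ admissible quadruples, and $\mathcal O\subseteq M(n',n)$ an intertwining $\pi_0(\mathbb G)$-orbit. Then $z_{\mathcal O}\in Z^2(\pi_0(\mathbb G),\mathcal F(\mathcal O,\mathbb C^* )_{\rho,\rho'})$. Moreover, if $c$ and $c'$ are replaced by $\tilde c=c\,\partial x$ and $\tilde c'=c'\,\partial x'$ for normalized 1-cochains $x,x'$ (so that $\tilde c,\tilde c'$ have the same classes as $c,c'$ modulo coboundaries), the resulting cocycle $\tilde z_{\mathcal O}$ is cohomologous to $z_{\mathcal O}$; thus the cohomology class of $z_{\mathcal O}$ depends only on the classes of $c$ and $c'$ modulo coboundaries.
   Context: $\mathbb G$ special 2-group: skeletal monoidal groupoid with strictly invertible objects and trivial unit constraints; objects form the group $\pi_0(\mathbb G)$, $\pi_1(\mathbb G)=\mathrm{Aut}(e)$ is a $\pi_0(\mathbb G)$-module via $g\cdot u=\gamma_g^{-1}(\delta_g(u))$ ($\gamma_g(u)=u\otimes\mathrm{id}_g$, $\delta_g(u)=\mathrm{id}_g\otimes u$), canonical classifying 3-cocycle $\alpha(g_1,g_2,g_3)=\gamma^{-1}_{g_1g_2g_3}(a_{g_1,g_2,g_3})$. $S_n$ acts on $(\mathbb C^* )^n$ by $(\sigma\cdot\boldsymbol\lambda)_i=\lambda_{\sigma^{-1}(i)}$; $(\mathbb C^* )^n_\rho$ has $\pi_0(\mathbb G)$ acting through $\rho$. An admissible quadruple $(n,\rho,\beta,c)$: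 $n\ge1$, $\rho:\pi_0(\mathbb G)\to S_n$ a homomorphism, $\beta:\pi_1(\mathbb G)\to(\mathbb C^* )^n_\rho$ a module homomorphism with $[\beta\circ\alpha]=0$ in $H^3$, $c$ a normalized 2-cochain with values in $(\mathbb C^* )^n_\rho$ with $\partial c=\beta\circ\alpha$ (multiplicative notation, standard group-cochain coboundary). $M(n',n)=\{1,\dots,n'\}\times\{1,\dots,n\}$ with right action $(i',i)\cdot g=(\rho'(g)^{-1}(i'),\rho(g)^{-1}(i))$; $I(\beta,\beta')=\{(i',i):\beta'_{i'}=\beta_i\}$; an orbit $\mathcal O$ is intertwining if $\mathcal O\subseteq I(\beta,\beta')$. $\mathcal F(\mathcal O,\mathbb C^* )_{\rho,\rho'}$ is the multiplicative group of functions $\lambda:\mathcal O\to\mathbb C^*$ with $\pi_0(\mathbb G)$-module structure $(g\cdot\lambda)(p)=\lambda(p\cdot g)$. $z_{\mathcal O}(g_1,g_2)(i',i)=c'(g_1,g_2)_{i'}/c(g_1,g_2)_i$ for $(i',i)\in\mathcal O$. *)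

(* Defs.v *)
From HB Require Import structures.
From mathcomp Require Import all_boot all_order all_algebra all_fingroup.
From mathcomp Require Import complex Rstruct.
From Stdlib Require Import ClassicalEpsilon.

Set Implicit Arguments.
Unset Strict Implicit.
Unset Printing Implicit Defensive.
Import GRing.Theory.
Local Open Scope ring_scope.

Definition CC : fieldType := complex Rdefinitions.R.

(* A skeletal monoidal groupoid: objects form a group (strictly        *)
(* invertible objects, strict tensor on objects = group law); since it *)
(* is skeletal, every morphism is an automorphism of an object; we     *)
(* encode all morphisms in one type [Mor] with their (source = target) *)
(* object [src].  [mcomp f h] is the composite f o h (defined when     *)
(* src f = src h).  Unit constraints are trivial (identities).         *)
Record special2Group := Special2Group {
  Ob : Type;
  omul : Ob -> Ob -> Ob;
  oone : Ob;
  oinv : Ob -> Ob;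
  omulA : forall x y z, omul x (omul y z) = omul (omul x y) z;
  omul1o : forall x, omul oone x = x;
  omulo1 : forall x, omul x oone = x;
  omulVo : forall x, omul (oinv x) x = oone;
  omuloV : forall x, omul x (oinv x) = oone;
  Mor : Type;
  src : Mor -> Ob;
  mcomp : Mor -> Mor -> Mor;
  mid : Ob -> Mor;
  minv : Mor -> Mor;
  src_comp : forall f h, src f = src h -> src (mcomp f h) = src f;
  src_id : forall g, src (mid g) = g;
  src_inv : forall f, src (minv f) = src f;
  mcompA : forall f h k, src f = src h -> src h = src k ->
     mcomp f (mcomp h k) = mcomp (mcomp f h) k;
  mcomp1m : forall f, mcomp (mid (src f)) f = f;
  mcompm1 : forall f, mcomp f (mid (src f)) = f;
  mcompVm : forall f, mcomp (minv f) f = mid (src f);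
  mcompmV : forall f, mcomp f (minv f) = mid (src f);
  tens : Mor -> Mor -> Mor;
  src_tens : forall f h, src (tens f h) = omul (src f) (src h);
  tens_id : forall g h, tens (mid g) (mid h) = mid (omul g h);
  tens_comp : forall f f' h h', src f = src f' -> src h = src h' ->
     tens (mcomp f f') (mcomp h h') = mcomp (tens f h) (tens f' h');
  tens1m : forall f, tens (mid oone) f = f;
  tensm1 : forall f, tens f (mid oone) = f;
  assoc : Ob -> Ob -> Ob -> Mor;
  src_assoc : forall g1 g2 g3, src (assoc g1 g2 g3) = omul (omul g1 g2) g3;
  assoc_nat : forall f1 f2 f3,
     mcomp (assoc (src f1) (src f2) (src f3)) (tens (tens f1 f2) f3)
     = mcomp (tens f1 (tens f2 f3)) (assoc (src f1) (src f2) (src f3));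
  pentagon : forall g1 g2 g3 g4,
     mcomp (tens (mid g1) (assoc g2 g3 g4))
       (mcomp (assoc g1 (omul g2 g3) g4) (tens (assoc g1 g2 g3) (mid g4)))
     = mcomp (assoc g1 g2 (omul g3 g4)) (assoc (omul g1 g2) g3 g4);
  triangle : forall g h, assoc g oone h = mid (omul g h)
}.

Section TwoGroup.
Variable G : special2Group.
Local Notation Ob := (Ob G).
Local Notation Mor := (Mor G).
Local Notation "g1 ** g2" := (omul g1 g2) (at level 40, left associativity).

Definition in_pi1 (u : Mor) : Prop := src u = oone G.

Definition gamma (g : Ob) (u : Mor) : Mor := tens u (mid g).
Definition delta (g : Ob) (u : Mor) : Mor := tens (mid g) u.

(* gamma_g^{-1}(v): the (unique, since gamma_g : Aut(e) -> Aut(g) is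
   bijective) u in pi_1 with gamma_g(u) = v; chosen by classical choice. *)
Definition gammaInv (g : Ob) (v : Mor) : Mor :=
  match excluded_middle_informative (exists u, in_pi1 u /\ gamma g u = v) with
  | left ex => proj1_sig (constructive_indefinite_description _ ex)
  | right _ => mid (oone G)
  end.

Definition pi1_act (g : Ob) (u : Mor) : Mor := gammaInv g (delta g u).

(* canonical classifying 3-cocycle alpha = gamma^{-1}_{g1g2g3}(a_{g1,g2,g3}) *)
Definition alpha (g1 g2 g3 : Ob) : Mor :=
  gammaInv (g1 ** g2 ** g3) (assoc g1 g2 g3).

Variable n : nat.

Definition vec_act (rho : Ob -> {perm 'I_n}) (g : Ob) (v : 'I_n -> CC)
  : 'I_n -> CC := fun i => v (((rho g)^-1)%g i).

Definition is_perm_hom (rho : Ob -> {perm 'I_n}) : Prop :=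
  forall g h i, rho (g ** h) i = rho g (rho h i).

Definition is_module_hom (rho : Ob -> {perm 'I_n}) (beta : Mor -> 'I_n -> CC)
  : Prop :=
  [/\ forall u i, in_pi1 u -> beta u i != 0,
      forall u v i, in_pi1 u -> in_pi1 v -> beta (mcomp u v) i = beta u i * beta v i
    & forall g u i, in_pi1 u -> beta (pi1_act g u) i = vec_act rho g (beta u) i].

Definition cobound1 (rho : Ob -> {perm 'I_n}) (x : Ob -> 'I_n -> CC)
  (g1 g2 : Ob) : 'I_n -> CC :=
  fun i => vec_act rho g1 (x g2) i * (x (g1 ** g2) i)^-1 * x g1 i.

Definition cobound2 (rho : Ob -> {perm 'I_n}) (c : Ob -> Ob -> 'I_n -> CC)
  (g1 g2 g3 : Ob) : 'I_n -> CC :=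
  fun i => vec_act rho g1 (c g2 g3) i * (c (g1 ** g2) g3 i)^-1
           * c g1 (g2 ** g3) i * (c g1 g2 i)^-1.

Definition normalized_1cochain (x : Ob -> 'I_n -> CC) : Prop :=
  (forall g i, x g i != 0) /\ (forall i, x (oone G) i = 1).

Definition normalized_2cochain (c : Ob -> Ob -> 'I_n -> CC) : Prop :=
  [/\ forall g h i, c g h i != 0,
      forall g i, c (oone G) g i = 1 & forall g i, c g (oone G) i = 1].

Definition beta_alpha (beta : Mor -> 'I_n -> CC) (g1 g2 g3 : Ob) : 'I_n -> CC :=
  beta (alpha g1 g2 g3).

Definition admissible (rho : Ob -> {perm 'I_n}) (beta : Mor -> 'I_n -> CC)
  (c : Ob -> Ob -> 'I_n -> CC) : Prop :=
  [/\ (0 < n)%N /\ is_perm_hom rho, is_module_hom rho beta,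
      (* [beta o alpha] = 0 in H^3 *)
      (exists c0, normalized_2cochain c0 /\
         forall g1 g2 g3, cobound2 rho c0 g1 g2 g3 = beta_alpha beta g1 g2 g3),
      normalized_2cochain c
    & forall g1 g2 g3, cobound2 rho c g1 g2 g3 = beta_alpha beta g1 g2 g3].

End TwoGroup.

(* M(n',n) = 'I_n' x 'I_n with right action, orbits, and the module    *)
(* F(O, C^x)_{rho,rho'}.                                               *)
Section Orbits.
Variable G : special2Group.
Local Notation Ob := (Ob G).
Local Notation "g1 ** g2" := (omul g1 g2) (at level 40, left associativity).
Variables n n' : nat.
Variable rho : Ob -> {perm 'I_n}.
Variable rho' : Ob -> {perm 'I_n'}.

Definition Mact (p : 'I_n' * 'I_n) (g : Ob) : 'I_n' * 'I_n :=
  (((rho' g)^-1)%g p.1, ((rho g)^-1)%g p.2).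

Definition is_orbit (O : {set ('I_n' * 'I_n)}) : Prop :=
  exists p0, forall p, p \in O <-> exists g, p = Mact p0 g.

Definition intertwining (beta : Mor G -> 'I_n -> CC) (beta' : Mor G -> 'I_n' -> CC)
  (O : {set ('I_n' * 'I_n)}) : Prop :=
  forall p, p \in O -> forall u, in_pi1 u -> beta' u p.1 = beta u p.2.

(* elements of F(O, C^x) are functions on M(n',n) considered on O only;
   (g . lambda)(p) = lambda(p . g) *)
Definition F_act (g : Ob) (lam : 'I_n' * 'I_n -> CC) : 'I_n' * 'I_n -> CC :=
  fun p => lam (Mact p g).

Definition F_cobound1 (y : Ob -> 'I_n' * 'I_n -> CC) (g1 g2 : Ob)
  : 'I_n' * 'I_n -> CC :=
  fun p => F_act g1 (y g2) p * (y (g1 ** g2) p)^-1 * y g1 p.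

Definition F_cobound2 (z : Ob -> Ob -> 'I_n' * 'I_n -> CC) (g1 g2 g3 : Ob)
  : 'I_n' * 'I_n -> CC :=
  fun p => F_act g1 (z g2 g3) p * (z (g1 ** g2) g3 p)^-1
           * z g1 (g2 ** g3) p * (z g1 g2 p)^-1.

Definition Z2F (O : {set ('I_n' * 'I_n)}) (z : Ob -> Ob -> 'I_n' * 'I_n -> CC)
  : Prop :=
  (forall g1 g2 p, p \in O -> z g1 g2 p != 0) /\
  (forall g1 g2 g3 p, p \in O -> F_cobound2 z g1 g2 g3 p = 1).

Definition cohomologousF (O : {set ('I_n' * 'I_n)})
  (z1 z2 : Ob -> Ob -> 'I_n' * 'I_n -> CC) : Prop :=
  exists y : Ob -> 'I_n' * 'I_n -> CC,
    (forall g p, p \in O -> y g p != 0) /\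
    (forall g1 g2 p, p \in O -> z1 g1 g2 p = z2 g1 g2 p * F_cobound1 y g1 g2 p).

End Orbits.

Definition zO (G : special2Group) (n n' : nat)
  (c : Ob G -> Ob G -> 'I_n -> CC) (c' : Ob G -> Ob G -> 'I_n' -> CC)
  (g1 g2 : Ob G) (p : 'I_n' * 'I_n) : CC :=
  c' g1 g2 p.1 / c g1 g2 p.2.

Definition twist (G : special2Group) (n : nat) (rho : Ob G -> {perm 'I_n})
  (c : Ob G -> Ob G -> 'I_n -> CC) (x : Ob G -> 'I_n -> CC)
  (g1 g2 : Ob G) (i : 'I_n) : CC :=
  c g1 g2 i * cobound1 rho x g1 g2 i.

(* Main.v *)
Require Import Defs.
From mathcomp Require Import all_boot all_order all_algebra all_fingroup.
From mathcomp Require Import complex Rstruct.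
From mathcomp Require Import ring.
From Stdlib Require Import ClassicalEpsilon.
Local Open Scope ring_scope.
Import GRing.Theory.

Lemma inv_hom {G : special2Group} {n} {rho : Ob G -> {perm 'I_n}} :
  is_perm_hom rho -> forall g1 g2 i,
  ((rho (omul g1 g2))^-1)%g i = ((rho g2)^-1)%g (((rho g1)^-1)%g i).
Proof.
move=> H g1 g2 i; apply: (@perm_inj _ (rho (omul g1 g2))).
by rewrite permKV H !permKV.
Qed.

Lemma gammaInv_pi1 (G : special2Group) g v : in_pi1 (@gammaInv G g v).
Proof.
rewrite /gammaInv; case: excluded_middle_informative => [ex|_].
  by case: (constructive_indefinite_description _ ex) => u [].
exact: src_id.
Qed.

Lemma ratio4 (A B C D A' B' C' D' : CC) :
  A != 0 -> B != 0 -> C != 0 -> D != 0 ->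
  A' != 0 -> B' != 0 -> C' != 0 -> D' != 0 ->
  A'/A * (B'/B)^-1 * (C'/C) * (D'/D)^-1 =
  (A' * B'^-1 * C' * D'^-1) / (A * B^-1 * C * D^-1).
Proof. by move=> *; field; do ?[apply/andP; split]. Qed.

Theorem mainTheorem9 (G : special2Group) (n n' : nat)
  (rho : Ob G -> {perm 'I_n}) (beta : Mor G -> 'I_n -> CC)
  (c : Ob G -> Ob G -> 'I_n -> CC)
  (rho' : Ob G -> {perm 'I_n'}) (beta' : Mor G -> 'I_n' -> CC)
  (c' : Ob G -> Ob G -> 'I_n' -> CC)
  (O : {set ('I_n' * 'I_n)}) :
  admissible rho beta c ->
  admissible rho' beta' c' ->
  is_orbit rho rho' O ->
  intertwining beta beta' O ->
  Z2F rho rho' O (zO c c') /\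
  (forall (x : Ob G -> 'I_n -> CC) (x' : Ob G -> 'I_n' -> CC),
     normalized_1cochain x -> normalized_1cochain x' ->
     Z2F rho rho' O (zO (twist rho c x) (twist rho' c' x')) /\
     cohomologousF rho rho' O (zO (twist rho c x) (twist rho' c' x')) (zO c c')).
Proof.
move=> [[_ Hr] [Hb0 _ _] _ [Hc0 _ _] Hc] [[_ Hr'] [Hb0' _ _] _ [Hc0' _ _] Hc'] _ Hint.
have Z1 : Z2F rho rho' O (zO c c').
  split=> [g1 g2 p _|g1 g2 g3 p pO].
    by rewrite /zO mulf_neq0 ?invr_neq0.
  have E := f_equal (fun v => v p.2) (Hc g1 g2 g3).
  have E' := f_equal (fun v => v p.1) (Hc' g1 g2 g3).
  rewrite /cobound2 /= in E E'.
  rewrite /F_cobound2 /F_act /zO /Mact /=.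
  rewrite ratio4 ?Hc0 ?Hc0' //.
  have -> : c g2 g3 (((rho g1)^-1)%g p.2) = vec_act rho g1 (c g2 g3) p.2 by [].
  have -> : c' g2 g3 (((rho' g1)^-1)%g p.1) = vec_act rho' g1 (c' g2 g3) p.1 by [].
  rewrite E E' /beta_alpha (Hint p pO _ (gammaInv_pi1 _ _ _)) divff //.
  exact: Hb0 (gammaInv_pi1 _ _ _).
split=> // x x' [Hx0 _] [Hx0' _].
pose y g (p : 'I_n' * 'I_n) := x' g p.1 / x g p.2.
have Hpt : forall g1 g2 p, zO (twist rho c x) (twist rho' c' x') g1 g2 p =
    zO c c' g1 g2 p * F_cobound1 rho rho' y g1 g2 p.
  move=> g1 g2 p; rewrite /zO /twist /cobound1 /F_cobound1 /F_act /vec_act /Mact /y /=.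
  by field; do ?[apply/andP; split]; rewrite ?mulf_neq0 ?invr_neq0 ?Hx0 ?Hx0' ?Hc0 ?Hc0' ?Z0.
split; last first.
  exists y; split=> [g p _|g1 g2 p _]; last by rewrite Hpt.
  by rewrite /y mulf_neq0 ?invr_neq0.
case: Z1 => Z0 Zc; split=> [g1 g2 p pO|g1 g2 g3 p pO].
  rewrite Hpt mulf_neq0 ?Z0 // /F_cobound1 /F_act /y; by rewrite !(mulf_neq0, invr_neq0, Hx0, Hx0').
have := Zc g1 g2 g3 p pO.
rewrite /F_cobound2 /F_act !Hpt /F_cobound1 /F_act /y /zO /Mact /= !omulA.
rewrite !(inv_hom Hr) !(inv_hom Hr').
move=> Hz; rewrite -[RHS]Hz.
by field; do ?[apply/andP; split]; rewrite ?mulf_neq0 ?invr_neq0 ?Hx0 ?Hx0' ?Hc0 ?Hc0' ?Z0.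
Qed.
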